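(* Let $\{G_i\}$ be a family of connected graphs with common induced subgraph $J$, embedded as $J_i\subseteq G_i$, such that $\{(G_i|J_i)\}$ is isometric, and let $H=\amalg\{(G_i|J_i)\}$. If, for every $i$, every traversal $T_i$ for $\parallel(J_i:G_i)$ contains a local metric basis for $G_i$, then $\dim_l(H)=\sum_i\dim_l(G_i)$.
   Context: $d$ is shortest-path distance (in $H$ unless otherwise stated). A vertex $w$ distinguishes an edge $uv$ if $d(w,u)\neq d(w,v)$. A local metric basis of $G$ is a minimum-size set of vertices such that every edge of $G$ is distinguished (with distances in $G$) by one of them; $\dim_l(G)$ is its size. $J$ is a common induced subgraph of each $G_i$ via injective maps $\iota_i:V(J)\to V(G_i)$ with $\iota_i(x)\iota_i(y)\in E(G_i)$ iff $xy\in E(J)$; $J_i$ is the induced image, $x^i=\iota_i(x)$. $H=\amalg\{(G_i|J_i)\}$ is obtained from the disjoint union of the $G_i$ by identifying, for each $x\in V(J)$, all $x^i$ into one vertex; each $G_i$ is a subgraph of $H$. The family is isometric if $d_{G_i}(a^i,b^i)=d_{G_j}(a^j,b^j)$ for all $i,j$, $a,b\in V(J)$. $\parallel(J_i:G_i)$ is the set of edges $uv$ of $G_i-J_i$ with $d_{G_i}(w,u)=d_{G_i}(w,v)$ for all $w\in V(J_i)$. A traversal for $\parallel(J_i:G_i)$ is a minimum-size set $T_i\subseteq V(G_i-J_i)$ such that every edge of $\parallel(J_i:G_i)$ is distinguished (distances in $H$) by some vertex of $T_i$. *)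

(* Defs.v *)
From mathcomp Require Import all_boot.
Set Implicit Arguments. Unset Strict Implicit. Unset Printing Implicit Defensive.

Definition simple_graph (T : finType) (e : rel T) : Prop :=
  symmetric e /\ irreflexive e.

Definition connected_graph (T : finType) (e : rel T) : Prop :=
  forall x y : T, connect e x y.

Fixpoint ball (T : finType) (e : rel T) (n : nat) (x : T) : {set T} :=
  match n with
  | 0 => [set x]
  | n'.+1 => ball e n' x :|: [set y | [exists z in ball e n' x, e z y]]
  end.

(* shortest-path distance; for unreachable pairs it is the sentinel #|T|,
   which is strictly larger than every finite distance *)
Definition dist (T : finType) (e : rel T) (x y : T) : nat :=
  find (fun n => y \in ball e n x) (iota 0 #|T|).

Definition distinguishes (T : finType) (e : rel T) (w u v : T) : bool :=
  dist e w u != dist e w v.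

Definition local_resolving (T : finType) (e : rel T) (W : {set T}) : bool :=
  [forall u : T, forall v : T, e u v ==> [exists w in W, distinguishes e w u v]].

Definition dim_l (T : finType) (e : rel T) : nat :=
  \big[minn/#|T|]_(W : {set T} | local_resolving e W) #|W|.

Definition local_metric_basis (T : finType) (e : rel T) (W : {set T}) : Prop :=
  local_resolving e W /\ #|W| = dim_l e.

Section Amalgam.
Variables (I : finType) (V : I -> finType) (VJ : finType)
          (iota : forall i, VJ -> V i).

(* vertices of H: one copy of V(J), plus, for each i, the vertices of G_i
   outside J_i *)
Definition amalg_vertex : finType :=
  (VJ + {i : I & {v : V i | v \notin codom (iota i)}})%type.

Lemma pick_none_notin (i : I) (v : V i) :
  [pick x | iota i x == v] = None -> v \notin codom (iota i).
Proof.
move=> h; apply/negP => /codomP [x ex].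
by case: pickP h => // /(_ x); rewrite ex eqxx.
Qed.

Definition emb (i : I) (v : V i) : amalg_vertex :=
  match [pick x | iota i x == v] as o
        return ([pick x | iota i x == v] = o -> amalg_vertex) with
  | Some x => fun _ => inl x
  | None => fun h => inr (existT _ i (exist _ v (pick_none_notin h)))
  end erefl.

Definition amalg_edge (G : forall i, rel (V i)) : rel amalg_vertex :=
  fun u w => [exists i : I, [exists a : V i, [exists b : V i,
                [&& G i a b, emb a == u & emb b == w]]]].

End Amalgam.

Arguments amalg_edge [I V VJ] iota G _ _.

Definition in_J (VJ : finType) (W : finType) (f : VJ -> W) (v : W) : bool :=
  v \in codom f.

Definition parallel_edge (VJ W : finType) (G : rel W) (f : VJ -> W) (u v : W)
  : bool :=
  [&& G u v, u \notin codom f, v \notin codom f &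
      [forall x : VJ, dist G (f x) u == dist G (f x) v]].

Definition traversal_cover (I : finType) (V : I -> finType) (VJ : finType)
  (iota : forall i, VJ -> V i) (G : forall i, rel (V i)) (i : I)
  (T : {set V i}) : Prop :=
  T \subset [set v | v \notin codom (iota i)] /\
  forall u v : V i, parallel_edge (G i) (iota i) u v ->
    exists2 t, t \in T &
      distinguishes (amalg_edge iota G) (emb iota t) (emb iota u) (emb iota v).

Definition traversal (I : finType) (V : I -> finType) (VJ : finType)
  (iota : forall i, VJ -> V i) (G : forall i, rel (V i)) (i : I)
  (T : {set V i}) : Prop :=
  traversal_cover iota G T /\
  forall T' : {set V i}, traversal_cover iota G T' -> #|T| <= #|T'|.

Definition isometric_family (I : finType) (V : I -> finType) (VJ : finType)
  (iota : forall i, VJ -> V i) (G : forall i, rel (V i)) : Prop :=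
  forall (i j : I) (a b : VJ),
    dist (G i) (iota i a) (iota i b) = dist (G j) (iota j a) (iota j b).

Definition induced_embedding (VJ W : finType) (EJ : rel VJ) (G : rel W)
  (f : VJ -> W) : Prop :=
  injective f /\ forall x y : VJ, G (f x) (f y) = EJ x y.

(* Main.v *)
Require Import Defs.
From mathcomp Require Import all_boot.
From Stdlib Require Classical_Prop.
Set Implicit Arguments. Unset Strict Implicit. Unset Printing Implicit Defensive.

Lemma bigmin_le (I : finType) (P : pred I) (F : I -> nat) d i :
  P i -> \big[minn/d]_(j | P j) F j <= F i.
Proof.
move=> h; have : i \in index_enum I by rewrite mem_index_enum.
elim: (index_enum I) => // a r IH; rewrite inE big_cons => /orP [/eqP <-|/IH hr].
  by rewrite h geq_minl.
by case: (P a) => //; rewrite geq_min hr orbT.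
Qed.

Section Dist.
Variables (T : finType) (e : rel T).

Lemma ball_S n x y : (y \in ball e n.+1 x) = (y \in ball e n x) || [exists z in ball e n x, e z y].
Proof. by rewrite /= inE inE. Qed.

Lemma ball_comp m n x y z : y \in ball e m x -> z \in ball e n y -> z \in ball e (m + n) x.
Proof.
move=> hy; elim: n z => [|n IH] z; first by rewrite addn0 /=; move=> /set1P ->.
rewrite addnS ball_S => /orP [/IH h|/existsP [w /andP [hw ew]]]; first by rewrite ball_S h.
by rewrite ball_S; apply/orP; right; apply/existsP; exists w; rewrite IH.
Qed.

Lemma dist_le_card x y : dist e x y <= #|T|.
Proof. by rewrite /dist; apply: leq_trans (find_size _ _) _; rewrite size_iota. Qed.

Lemma dist_ball x y : dist e x y < #|T| -> y \in ball e (dist e x y) x.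
Proof.
rewrite /dist => h.
have hh : has (fun n => y \in ball e n x) (iota 0 #|T|) by rewrite has_find size_iota.
have := nth_find 0 hh; rewrite nth_iota //.
Qed.

Lemma ball_dist n x y : y \in ball e n x -> dist e x y <= n.
Proof.
move=> h; case: (ltnP n #|T|) => hn; last by apply: leq_trans (dist_le_card _ _) hn.
rewrite leqNgt; apply/negP => /(before_find 0); rewrite nth_iota // add0n h //.
Qed.

Lemma dist0 x : dist e x x = 0.
Proof. by apply/eqP; rewrite -leqn0; apply: (@ball_dist 0); rewrite /= inE. Qed.

Lemma dist0_eq x y : dist e x y = 0 -> x = y.
Proof.
move=> h; have : dist e x y < #|T| by rewrite h; apply/card_gt0P; exists x.
by move/dist_ball; rewrite h /= inE => /eqP.
Qed.

Lemma dist_tri x y z : dist e x z <= dist e x y + dist e y z.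
Proof.
case: (ltnP (dist e x y) #|T|) => h1; last first.
  by apply: leq_trans (dist_le_card _ _) (leq_trans h1 (leq_addr _ _)).
case: (ltnP (dist e y z) #|T|) => h2; last first.
  by apply: leq_trans (dist_le_card _ _) (leq_trans h2 (leq_addl _ _)).
by apply: ball_dist; apply: ball_comp (dist_ball h1) (dist_ball h2).
Qed.

Lemma ball1 x y : e x y -> y \in ball e 1 x.
Proof. by move=> h; rewrite ball_S; apply/orP; right; apply/existsP; exists x; rewrite /= inE eqxx. Qed.

Lemma dist_edge x y z : e y z -> dist e x z <= dist e x y + 1.
Proof. by move=> h; apply: leq_trans (dist_tri x y z) _; rewrite leq_add2l; apply: ball_dist; apply: ball1. Qed.

Lemma path_ball x p : path e x p -> last x p \in ball e (size p) x.
Proof.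
elim: p x => [|y p IH] x /=; first by rewrite inE.
by case/andP => exy hp; have := ball_comp (ball1 exy) (IH _ hp).
Qed.

Lemma connect_dist x y : connect e x y -> dist e x y < #|T|.
Proof.
case/connectP => p hp ->; case: (shortenP hp) => p' hp' hu _.
apply: leq_ltn_trans (ball_dist (path_ball hp')) _.
move/card_uniqP: hu => hc.
by have := max_card (mem (x :: p')); rewrite hc.
Qed.

Lemma lip_ball (f : T -> nat) x : f x = 0 -> (forall u v, e u v -> f v <= f u + 1) ->
  forall n y, y \in ball e n x -> f y <= n.
Proof.
move=> f0 hl; elim=> [|n IH] y; first by rewrite /= inE => /eqP ->; rewrite f0.
rewrite ball_S => /orP [/IH /leqW //|/existsP [z /andP [hz ezy]]].
by apply: leq_trans (hl _ _ ezy) _; rewrite addn1 ltnS IH.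
Qed.

Lemma lip_dist (f : T -> nat) x : f x = 0 -> (forall u v, e u v -> f v <= f u + 1) ->
  (forall y, f y <= #|T|) -> forall y, f y <= dist e x y.
Proof.
move=> f0 hl hb y; case: (ltnP (dist e x y) #|T|) => h.
  by apply: lip_ball f0 hl _ _ (dist_ball h).
by apply: leq_trans (hb y) h.
Qed.

Lemma local_resolving_min W : local_resolving e W -> dim_l e <= #|W|.
Proof.
by move=> h; rewrite /dim_l; apply: bigmin_le.
Qed.

Lemma dim_l_attained W : local_resolving e W ->
  exists W0, local_resolving e W0 /\ #|W0| = dim_l e.
Proof.
move=> hW.
case: (arg_minnP (fun W : {set T} => #|W|) hW) => W0 h0 hmin.
exists W0; split => //; apply/eqP; rewrite eqn_leq local_resolving_min // andbT.
rewrite /dim_l; elim/big_ind: _ => //; first exact: max_card.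
by move=> a b ha hb; rewrite leq_min ha hb.
Qed.

End Dist.

Lemma le_bigmin (I : finType) (P : pred I) (F : I -> nat) d m :
  m <= d -> (forall i, P i -> m <= F i) -> m <= \big[minn/d]_(j | P j) F j.
Proof. by move=> hd h; elim/big_ind: _ => // a b ha hb; rewrite leq_min ha hb. Qed.

Lemma bigmin_le_d (I : finType) (P : pred I) (F : I -> nat) d :
  \big[minn/d]_(j | P j) F j <= d.
Proof. by elim/big_rec: _ => // a b _ hb; rewrite geq_min hb orbT. Qed.

Lemma bigmin_lip (I : finType) (F G : I -> nat) d :
  (forall i, F i <= G i + 1) -> \big[minn/d]_j F j <= \big[minn/d]_j G j + 1.
Proof.
move=> h; elim/big_ind2: _ => //; first by rewrite addn1.
by move=> a1 a2 b1 b2 h1 h2; rewrite addn_minl leq_min !geq_min h1 h2 orbT.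
Qed.

Section Card.
Variables (T : finType) (I : eqType) (S : I -> {set T}).

Lemma card_bigcup_seq (r : seq I) : #|\bigcup_(i <- r) S i| <= \sum_(i <- r) #|S i|.
Proof.
elim: r => [|a r IH]; first by rewrite !big_nil cards0.
rewrite !big_cons; apply: leq_trans (leq_card_setU _ _).1 _.
by rewrite leq_add2l.
Qed.

Hypothesis hdisj : forall i j, i != j -> S i :&: S j = set0.

Lemma setI_bigcup a (r : seq I) : a \notin r -> S a :&: \bigcup_(i <- r) S i = set0.
Proof.
elim: r => [|b r IH]; first by rewrite big_nil setI0.
rewrite inE negb_or => /andP [hab hr]; rewrite big_cons setIUr IH // setU0.
exact: hdisj.
Qed.

Lemma card_bigcup_disj (r : seq I) : uniq r -> #|\bigcup_(i <- r) S i| = \sum_(i <- r) #|S i|.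
Proof.
elim: r => [|a r IH]; first by rewrite !big_nil cards0.
rewrite /= => /andP [har hu]; rewrite !big_cons cardsU setI_bigcup // cards0 subn0 IH //.
Qed.
End Card.

Lemma min_exists (T : finType) (P : {set T} -> Prop) X : P X ->
  exists T0, P T0 /\ forall T', P T' -> #|T0| <= #|T'|.
Proof.
suff: forall n (X : {set T}), #|X| <= n -> P X -> exists T0, P T0 /\ forall T', P T' -> #|T0| <= #|T'|.
  by move=> h; apply: h (leqnn _).
elim=> [|n IH] Y hY hP.
  by exists Y; split => // T' _; move: hY; rewrite leqn0 => /eqP ->.
case: (Classical_Prop.classic (exists T', P T' /\ #|T'| < #|Y|)) => [[T' [h1 h2]]|hn].
  by apply: (IH T') => //; rewrite -ltnS (leq_trans h2).
exists Y; split => // T' hT'; rewrite leqNgt; apply/negP => hlt; apply: hn; by exists T'.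
Qed.

Lemma argmin_basis (T : finType) (e : rel T) (W : {set T}) : local_resolving e W ->
  let W0 := [arg min_(X < W | local_resolving e X) #|X|] in
  local_resolving e W0 /\ #|W0| = dim_l e.
Proof.
move=> hW /=.
case: (arg_minnP (fun W : {set T} => #|W|) hW) => W0 h0 hmin.
split => //; apply/eqP; rewrite eqn_leq local_resolving_min // andbT.
rewrite /dim_l; elim/big_ind: _ => //; first exact: max_card.
by move=> a b ha hb; rewrite leq_min ha hb.
Qed.

Lemma setT_resolving (T : finType) (e : rel T) : irreflexive e -> local_resolving e setT.
Proof.
move=> hirr; apply/forallP => u; apply/forallP => v; apply/implyP => huv.
apply/existsP; exists u; rewrite inE /distinguishes dist0 eq_sym.
apply/negP => /eqP /dist0_eq huv'; by rewrite huv' hirr in huv.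
Qed.

Unset Implicit Arguments.

Section E.
Variables (I : finType) (V : I -> finType) (VJ : finType) (iota : forall i, VJ -> V i).
Variable (G : forall i, rel (V i)).
Hypothesis hinj : forall i, injective (iota i).
Hypothesis hconn : forall i, connected_graph (G i).
Hypothesis hiso : isometric_family iota G.

Local Notation H := (amalg_vertex iota).
Local Notation EH := (amalg_edge iota G).
Local Notation dH := (dist EH).

Lemma emb_J i x : emb iota (iota i x) = inl x.
Proof.
rewrite /emb.
move: (@pick_none_notin I V VJ iota i (iota i x)).
case: pickP => [y /eqP /hinj -> //|/(_ x)]; by rewrite eqxx.
Qed.

Lemma emb_out i v (h : v \notin codom (iota i)) :
  emb iota v = inr (existT _ i (exist _ v h)).
Proof.
rewrite /emb.
move: (@pick_none_notin I V VJ iota i v).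
case: pickP => [y /eqP hy|hn] pf.
  by exfalso; move: h; rewrite -hy codom_f.
by rewrite (bool_irrelevance (pf _) h).
Qed.

Lemma emb_inj i : injective (@emb I V VJ iota i).
Proof.
move=> a b.
case: (boolP (a \in codom (iota i))) => [/codomP [x ->]|ha];
case: (boolP (b \in codom (iota i))) => [/codomP [y ->]|hb].
- by rewrite !emb_J => [[->]].
- by rewrite emb_J emb_out.
- by rewrite emb_J emb_out.
- rewrite !emb_out => [[]] h.
  have := congr1 (fun s => tagged_as (existT (fun x : I => V x) i a) s) h.
  by rewrite /= !tagged_asE.
Qed.

Lemma card_le k : #|V k| <= #|H|.
Proof.
rewrite -cardsT -(card_imset [set: V k] (@emb_inj k)); exact: max_card.
Qed.

Lemma map_ball k n (a b : V k) : b \in ball (G k) n a -> emb iota b \in ball EH n (emb iota a).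
Proof.
elim: n b => [|n IH] b; first by rewrite /= !inE => /eqP ->.
rewrite !ball_S => /orP [/IH -> //|/existsP [z /andP [hz ezb]]].
apply/orP; right; apply/existsP; exists (emb iota z); rewrite IH //=.
by apply/existsP; exists k; apply/existsP; exists z; apply/existsP; exists b; rewrite ezb !eqxx.
Qed.

Lemma dH_le k (a b : V k) : dH (emb iota a) (emb iota b) <= dist (G k) a b.
Proof. exact: ball_dist (@map_ball k _ a b (dist_ball (connect_dist (hconn k a b)))). Qed.

Section F.
Variables (k : I) (p : V k).

Definition M j (v : V j) : nat :=
  \big[minn/#|H|]_x (dist (G k) p (iota k x) + dist (G j) (iota j x) v).

Definition phi j (v : V j) : nat :=
  match k =P j with
  | ReflectT e => dist (G j) (eq_rect k V p j e) v
  | ReflectF _ => M j v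
  end.

Definition F (h : H) : nat :=
  match h with
  | inl x => dist (G k) p (iota k x)
  | inr s => phi (tag s) (sval (tagged s))
  end.

Lemma phi_k v : phi k v = dist (G k) p v.
Proof. by rewrite /phi; case: eqP => // e; rewrite (eq_irrelevance e erefl). Qed.

Lemma phi_j j (v : V j) : k != j -> phi j v = M j v.
Proof. by rewrite /phi; case: eqP. Qed.

Lemma M_J j x0 : M j (iota j x0) = dist (G k) p (iota k x0).
Proof.
apply/eqP; rewrite eqn_leq; apply/andP; split.
  apply: leq_trans (@bigmin_le VJ predT _ _ x0 isT) _.
  by rewrite dist0 addn0.
apply: le_bigmin.
  exact: leq_trans (dist_le_card _ _ _) (card_le k).
by move=> x _; rewrite -(hiso k j); apply: dist_tri.
Qed.

Lemma F_emb j c : F (emb iota c) = phi j c.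
Proof.
case: (boolP (c \in codom (iota j))) => [/codomP [x0 ->]|hc].
  rewrite emb_J /=; case: (eqVneq k j) => [e|hne].
    by subst j; rewrite phi_k.
  by rewrite phi_j // M_J.
by rewrite emb_out.
Qed.

Lemma F_lip u v : EH u v -> F v <= F u + 1.
Proof.
case/existsP => j /existsP [a /existsP [b /and3P [gab /eqP <- /eqP <-]]].
rewrite !F_emb; case: (eqVneq k j) => [e|hne].
  by subst j; rewrite !phi_k; apply: dist_edge gab.
rewrite !phi_j //; apply: bigmin_lip => x; rewrite -addnA leq_add2l.
exact: dist_edge gab.
Qed.

Lemma F_bound h : F h <= #|H|.
Proof.
case: h => [x|[j [v hv]]] /=.
  exact: leq_trans (dist_le_card _ _ _) (card_le k).
case: (eqVneq k j) => [e|hne].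
  by subst j; rewrite phi_k; exact: leq_trans (dist_le_card _ _ _) (card_le k).
rewrite phi_j //; exact: bigmin_le_d.
Qed.

Lemma F_dist h : F h <= dH (emb iota p) h.
Proof.
apply: lip_dist; last exact: F_bound.
  by rewrite F_emb phi_k dist0.
exact: F_lip.
Qed.

Lemma dH_iso (q : V k) : dH (emb iota p) (emb iota q) = dist (G k) p q.
Proof.
apply/eqP; rewrite eqn_leq dH_le /=.
by have := F_dist (emb iota q); rewrite F_emb phi_k.
Qed.

Lemma dH_cross j (q : V j) : k != j -> q \notin codom (iota j) ->
  dH (emb iota p) (emb iota q) = M j q.
Proof.
move=> hne hq; apply/eqP; rewrite eqn_leq; apply/andP; split; last first.
  by have := F_dist (emb iota q); rewrite F_emb phi_j.
apply: le_bigmin; first exact: dist_le_card.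
move=> x _; apply: leq_trans (dist_tri _ _ (inl x) _) _.
apply: leq_add.
  by rewrite -(emb_J k x); apply: dH_le.
by rewrite -(emb_J j x); apply: dH_le.
Qed.

End F.

Lemma upper : (forall i, irreflexive (G i)) -> dim_l EH <= \sum_i dim_l (G i).
Proof.
move=> hirr.
pose B i := [arg min_(X < [set: V i] | local_resolving (G i) X) #|X|].
have hB i : local_resolving (G i) (B i) /\ #|B i| = dim_l (G i)
  := argmin_basis (setT_resolving (hirr i)).
pose W := \bigcup_(i : I) [set emb iota v | v in B i].
have hW : local_resolving EH W.
  apply/forallP => u; apply/forallP => v; apply/implyP.
  case/existsP => j /existsP [a /existsP [b /and3P [gab /eqP <- /eqP <-]]].
  have := (hB j).1; move/forallP/(_ a)/forallP/(_ b)/implyP/(_ gab)/existsP => [w /andP [hw hd]].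
  apply/existsP; exists (emb iota w); rewrite /distinguishes in hd *; rewrite !dH_iso hd andbT.
  by apply/bigcupP; exists j => //; apply: imset_f.
apply: leq_trans (local_resolving_min hW) _.
apply: leq_trans (card_bigcup_seq _ _) _.
apply: leq_sum => i _; apply: leq_trans (leq_imset_card _ _) _.
by rewrite (hB i).2.
Qed.

Lemma lower : (forall i, irreflexive (G i)) ->
  (forall (i : I) (T : {set V i}), traversal iota G T ->
     exists2 B : {set V i}, B \subset T & local_metric_basis (G i) B) ->
  \sum_i dim_l (G i) <= dim_l EH.
Proof.
move=> hirr hyp.
have hirrH : irreflexive EH.
  move=> u; apply/negbTE/negP; case/existsP => j /existsP [a /existsP [b /and3P [gab /eqP ea /eqP eb]]].
  by move: gab; rewrite -ea in eb; rewrite (@emb_inj j _ _ eb) hirr.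
pose W0 := [arg min_(X < [set: H] | local_resolving EH X) #|X|].
have hW0 : local_resolving EH W0 /\ #|W0| = dim_l EH := argmin_basis (setT_resolving hirrH).
pose T' i := [set v : V i | (v \notin codom (iota i)) && (emb iota v \in W0)].
have hcov i : traversal_cover iota G (T' i).
  split; first by apply/subsetP => v; rewrite !inE => /andP [].
  move=> u v /and4P [guv hu hv /forallP hpar].
  have he : EH (emb iota u) (emb iota v).
    by apply/existsP; exists i; apply/existsP; exists u; apply/existsP; exists v; rewrite guv !eqxx.
  move: hW0.1 => /forallP/(_ (emb iota u))/forallP/(_ (emb iota v))/implyP/(_ he)/existsP [w /andP [hw hd]].
  case: w hw hd => [x|[j [q hq]]] hw hd.
    exfalso; move: hd; rewrite -(emb_J i x) /distinguishes !dH_iso (eqP (hpar x)) eqxx //.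
  case: (eqVneq j i) => [e|hne].
    subst j; exists q; first by rewrite inE hq /= (emb_out _ _ hq).
    by rewrite (emb_out _ _ hq).
  exfalso; move: hd; rewrite -(emb_out _ _ hq) /distinguishes !dH_cross //.
  rewrite /M; under eq_bigr => x _ do rewrite (eqP (hpar x)).
  by rewrite eqxx.
have hdim i : dim_l (G i) <= #|T' i|.
  case: (min_exists (hcov i)) => T0 [h0 hmin].
  case: (hyp i T0 (conj h0 hmin)) => B hBT [_ hB].
  by rewrite -hB; apply: leq_trans (subset_leq_card hBT) (hmin _ (hcov i)).
pose S i := [set emb iota v | v in T' i].
have hdisj : forall i j, i != j -> S i :&: S j = set0.
  move=> i j hne; apply/setP => h; rewrite !inE; apply/negP => /andP [/imsetP [a ha ->] /imsetP [b hb e]].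
  move: ha hb; rewrite !inE => /andP [ha _] /andP [hb _].
  move: e; rewrite (emb_out _ _ ha) (emb_out _ _ hb) => [[e _]].
  by move: hne; rewrite e eqxx.
apply: (@leq_trans (\sum_i #|T' i|)); first by apply: leq_sum => i _; exact: hdim.
rewrite -hW0.2.
have -> : \sum_i #|T' i| = \sum_i #|S i|.
  by apply: eq_bigr => i _; rewrite card_imset //; apply: emb_inj.
have := card_bigcup_disj hdisj (index_enum_uniq I).
rewrite /= => <-; apply: subset_leq_card; apply/subsetP => h /bigcupP [i _ /imsetP [v hv ->]].
by move: hv; rewrite inE => /andP [].
Qed.

End E.

Theorem lemma7 (I : finType) (V : I -> finType) (G : forall i, rel (V i))
  (VJ : finType) (EJ : rel VJ) (iota : forall i, VJ -> V i) :
  simple_graph EJ ->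
  (forall i, simple_graph (G i)) ->
  (forall i, connected_graph (G i)) ->
  (forall i, induced_embedding EJ (G i) (iota i)) ->
  isometric_family iota G ->
  (forall (i : I) (T : {set V i}), traversal iota G T ->
     exists2 B : {set V i}, B \subset T & local_metric_basis (G i) B) ->
  dim_l (amalg_edge iota G) = \sum_(i : I) dim_l (G i).
Proof.
move=> _ hsimp hconn hemb hiso hyp.
have hinj i : injective (iota i) := (hemb i).1.
have hirr i : irreflexive (G i) := (hsimp i).2.
apply/eqP; rewrite eqn_leq.
rewrite (@upper I V VJ iota G hinj hconn hiso hirr) /=.
exact: (@lower I V VJ iota G hinj hconn hiso hirr hyp).
Qed.
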